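(* Fix $l^0_{jk},l^0_{ki},l^0_{ij}>0$ and let $\mathcal{W}^{ijk}$ be the set of $(w_i,w_j,w_k)\in\mathbb{R}^3$ for which $l_{ab}>0$ defined by $\cosh\frac{l_{ab}}{2}=e^{w_a+w_b}\cosh\frac{l^0_{ab}}{2}$ exist for $ab\in\{jk,ki,ij\}$. For $(w_i,w_j,w_k)\in\mathcal{W}^{ijk}$, let $\theta^i_{jk},\theta^j_{ki},\theta^k_{ij}$ be the lengths of the sides opposite to the sides of lengths $l_{jk},l_{ki},l_{ij}$ in the hyperbolic right-angled hexagon whose three pairwise non-adjacent sides have lengths $l_{jk},l_{ki},l_{ij}$. Then the Jacobian matrix $\frac{\partial(\theta^i_{jk},\theta^j_{ki},\theta^k_{ij})}{\partial(w_i,w_j,w_k)}$ is symmetric.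
   Context: For any three positive numbers there is a hyperbolic right-angled hexagon, unique up to isometry, whose three pairwise non-adjacent sides have these lengths. *)

(* Defs.v *)
From Stdlib Require Import Reals Lra.
From Coquelicot Require Import Coquelicot.
Open Scope R_scope.

(** Points of R^{2,1} (Minkowski space), coordinates (x0,x1,x2). *)
Definition pt := (R * R * R)%type.

Definition mink (x y : pt) : R :=
  let '(x0, x1, x2) := x in let '(y0, y1, y2) := y in
  - x0 * y0 + x1 * y1 + x2 * y2.

(** Hyperboloid model of the hyperbolic plane. *)
Definition in_H (x : pt) : Prop :=
  let '(x0, _, _) := x in mink x x = -1 /\ 0 < x0.

Definition det3 (x y z : pt) : R :=
  let '(x0, x1, x2) := x in let '(y0, y1, y2) := y in let '(z0, z1, z2) := z in
  x0 * (y1 * z2 - y2 * z1) - x1 * (y0 * z2 - y2 * z0) + x2 * (y0 * z1 - y1 * z0).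

(** Tangent vector at p (in H) of the geodesic from p towards q: q + <p,q> p. *)
Definition tangent (p q : pt) : pt :=
  let '(p0, p1, p2) := p in let '(q0, q1, q2) := q in
  let c := mink p q in (q0 + c * p0, q1 + c * p1, q2 + c * p2).

Definition hdist_is (p q : pt) (L : R) : Prop :=
  0 <= L /\ cosh L = - mink p q.

(** Vertices of a hexagon P 0, ..., P 5 (indices taken mod 6);
    side a is the geodesic segment from P a to P (a+1). *)
Definition nxt (a : nat) : nat := ((a + 1) mod 6)%nat.
Definition prv (a : nat) : nat := ((a + 5) mod 6)%nat.

(** A (convex) hyperbolic right-angled hexagon: six points of H, forming a
    strictly convex polygon (for each side, all other vertices lie strictly on
    the same side of the geodesic line through it, with a consistent
    orientation), with a right angle at every vertex. *)
Definition right_angled_hexagon (P : nat -> pt) : Prop :=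
  (forall a, (a < 6)%nat -> in_H (P a)) /\
  (forall a, (a < 6)%nat ->
     mink (tangent (P a) (P (prv a))) (tangent (P a) (P (nxt a))) = 0) /\
  ((forall a b, (a < 6)%nat -> (b < 6)%nat -> b <> a -> b <> nxt a ->
      0 < det3 (P a) (P (nxt a)) (P b)) \/
   (forall a b, (a < 6)%nat -> (b < 6)%nat -> b <> a -> b <> nxt a ->
      det3 (P a) (P (nxt a)) (P b) < 0)).

Definition side_length (P : nat -> pt) (a : nat) (L : R) : Prop :=
  hdist_is (P a) (P (nxt a)) L.

Definition new_length (l0 wa wb l : R) : Prop :=
  0 < l /\ cosh (l / 2) = exp (wa + wb) * cosh (l0 / 2).

Definition in_W (l0jk l0ki l0ij wi wj wk : R) : Prop :=
  (exists l, new_length l0jk wj wk l) /\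
  (exists l, new_length l0ki wk wi l) /\
  (exists l, new_length l0ij wi wj l).

Definition partial_fun (f : R -> R -> R -> R) (b : nat) (wi wj wk : R) : R -> R :=
  match b with
  | O => fun t => f t wj wk
  | 1%nat => fun t => f wi t wk
  | _ => fun t => f wi wj t
  end.

Definition coord (b : nat) (wi wj wk : R) : R :=
  match b with O => wi | 1%nat => wj | _ => wk end.

Definition has_jacobian (F : nat -> R -> R -> R -> R) (wi wj wk : R) : Prop :=
  forall a b, (a < 3)%nat -> (b < 3)%nat ->
    ex_derive (partial_fun (F a) b wi wj wk) (coord b wi wj wk).

Definition jacobian (F : nat -> R -> R -> R -> R) (wi wj wk : R) (a b : nat) : R :=
  Derive (partial_fun (F a) b wi wj wk) (coord b wi wj wk).

Definition jacobian_symmetric (F : nat -> R -> R -> R -> R) (wi wj wk : R) : Prop :=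
  has_jacobian F wi wj wk /\
  forall a b, (a < 3)%nat -> (b < 3)%nat ->
    jacobian F wi wj wk a b = jacobian F wi wj wk b a.

Definition theta3 (thi thj thk : R -> R -> R -> R) (a : nat) : R -> R -> R -> R :=
  match a with O => thi | 1%nat => thj | _ => thk end.

(* Main.v *)
Require Import Defs.
From Stdlib Require Import Reals.
From Coquelicot Require Import Coquelicot.
From Stdlib Require Import Lra Psatz Lia.
Open Scope R_scope.

Definition mc (x y : pt) : pt :=
  let '(x0, x1, x2) := x in let '(y0, y1, y2) := y in
  (-(x1*y2 - x2*y1), x2*y0 - x0*y2, x0*y1 - x1*y0).

Lemma mink_sym x y : mink x y = mink y x.
Proof. destruct x as [[? ?] ?], y as [[? ?] ?]; simpl; ring. Qed.
Lemma mc_dot x y z : mink (mc x y) z = det3 x y z.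
Proof. destruct x as [[? ?] ?], y as [[? ?] ?], z as [[? ?] ?]; simpl; ring. Qed.
Lemma binet x y z w : mink (mc x y) (mc z w) = -(mink x z * mink y w - mink x w * mink y z).
Proof. destruct x as [[? ?] ?], y as [[? ?] ?], z as [[? ?] ?], w as [[? ?] ?]; simpl; ring. Qed.
Lemma det_swap23 x y z : det3 x z y = - det3 x y z.
Proof. destruct x as [[? ?] ?], y as [[? ?] ?], z as [[? ?] ?]; simpl; ring. Qed.
Lemma det_cyc x y z : det3 x y z = det3 y z x.
Proof. destruct x as [[? ?] ?], y as [[? ?] ?], z as [[? ?] ?]; simpl; ring. Qed.
Lemma dcdet x y z w : det3 (mc x y) (mc y z) (mc z w) = - det3 x y z * det3 y z w.
Proof. destruct x as [[? ?] ?], y as [[? ?] ?], z as [[? ?] ?], w as [[? ?] ?]; simpl; ring. Qed.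
Lemma idC x y z w : mink (mc (mc x y) (mc y z)) (mc (mc y z) (mc z w)) = det3 x y z * det3 y z w * mink y z.
Proof. destruct x as [[? ?] ?], y as [[? ?] ?], z as [[? ?] ?], w as [[? ?] ?]; simpl; ring. Qed.
Lemma projid a b n w : mink n n * det3 a b w - det3 a b n * mink n w = - mink a n * det3 b n w + mink b n * det3 a n w.
Proof. destruct a as [[? ?] ?], b as [[? ?] ?], n as [[? ?] ?], w as [[? ?] ?]; simpl; ring. Qed.
Lemma gram x y z : det3 x y z ^ 2 = - (mink x x * (mink y y * mink z z - mink y z ^ 2)
  - mink x y * (mink x y * mink z z - mink y z * mink x z)
  + mink x z * (mink x y * mink y z - mink y y * mink x z)).
Proof. destruct x as [[? ?] ?], y as [[? ?] ?], z as [[? ?] ?]; simpl; ring. Qed.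

Lemma sign_root e D s t : e * e = 1 -> 0 < e * D -> 0 <= s -> 0 <= t ->
  D ^ 2 = (s * s) * (t * t) -> D = e * (s * t) /\ 0 < s /\ 0 < t.
Proof.
  intros He HD Hs Ht Hsq.
  assert (H1 : (D - e * (s*t)) * (D + e * (s*t)) = 0).
  { replace ((D - e * (s*t)) * (D + e * (s*t))) with (D^2 - (e*e)*((s*s)*(t*t))) by ring.
    rewrite He, Hsq; ring. }
  assert (H2 : e * (D + e * (s*t)) > 0).
  { replace (e * (D + e * (s*t))) with (e*D + (e*e)*(s*t)) by ring. rewrite He.
    assert (0 <= s*t) by nra. lra. }
  assert (D + e*(s*t) <> 0) by (intro Hz; rewrite Hz in H2; lra).
  assert (HD' : D = e*(s*t)).
  { apply Rmult_integral in H1; destruct H1; [lra|contradiction]. }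
  split; [exact HD'|].
  rewrite HD' in HD. replace (e*(e*(s*t))) with ((e*e)*(s*t)) in HD by ring.
  rewrite He in HD. split; nra.
Qed.

Lemma DDl x y z cx cy sx sy : mink x x = -1 -> mink y y = -1 -> mink z z = -1 ->
     mink x y = - cx -> mink y z = - cy -> mink x z = - (cx * cy) ->
     sx * sx = cx * cx - 1 -> sy * sy = cy * cy - 1 ->
     det3 x y z ^ 2 = (sx * sx) * (sy * sy).
Proof. intros Hx Hy Hz Hxy Hyz Hxz Hsx Hsy.
    rewrite gram, Hx, Hy, Hz, Hxy, Hyz, Hxz, Hsx, Hsy. ring. Qed.

Lemma NNl x y c s : mink x x = -1 -> mink y y = -1 -> mink x y = - c ->
     s * s = c * c - 1 -> mink (mc x y) (mc x y) = s * s.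
Proof. intros Hx Hy Hxy Hs. rewrite binet, (mink_sym y x), Hx, Hy, Hxy, Hs. ring. Qed.

Lemma PPl x y z cx cy : mink y y = -1 -> mink x y = - cx -> mink y z = - cy ->
     mink x z = - (cx * cy) -> mink (mc x y) (mc y z) = 0.
Proof. intros Hy Hxy Hyz Hxz. rewrite binet, Hy, Hxy, Hyz, Hxz. ring. Qed.

Lemma CCl x y z w c : mink (mc x y) (mc y z) = 0 -> mink (mc y z) (mc z w) = 0 ->
     mink y z = - c ->
     mink (mc x y) (mc z w) * mink (mc y z) (mc y z) = - (det3 x y z * det3 y z w * c).
Proof. intros Ha Hb Hc.
    pose proof (idC x y z w) as I. rewrite binet, Ha, Hb, Hc in I. lra. Qed.

Lemma cancel_l X a b c s e : 0 < s -> e * e = 1 ->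
  X * (s * s) = - ((e * (a * s)) * (e * (s * b)) * c) -> X = - (a * b * c).
Proof. intros Hs He H.
  assert (H' : X * (s*s) = - (a*b*c) * (s*s)).
  { rewrite H. replace (- (e * (a * s) * (e * (s * b)) * c)) with (- ((e*e) * (a*b*c) * (s*s))) by ring.
    rewrite He; ring. }
  apply Rmult_eq_reg_r in H'; auto. nra. Qed.

Lemma final_alg c0 c2 c3 c4 s1 s2 s3 s4 s5 e N13 N35 N15 N24 Z :
  0 < s1 -> 0 < s2 -> 0 < s3 -> 0 < s4 -> 0 < s5 -> e * e = 1 ->
  N13 = - (s1 * s3 * c2) -> N35 = - (s3 * s5 * c4) -> N15 = - (s1 * s5 * c0) ->
  N24 = - (s2 * s4 * c3) ->
  s2 * s2 * (- (N13 * N35 - N15 * (s3 * s3))) = (e * (s1 * s2)) * (e * (s2 * s3)) * Z ->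
  s4 * s4 * Z = (e * (s3 * s4)) * (e * (s4 * s5)) * N24 ->
  c3 * (s2 * s4) = c2 * c4 + c0.
Proof. intros h1 h2 h3 h4 h5 He e1 e2 e3 e4 F1 F2.
  subst N13 N35 N15 N24.
  assert (F1' : s2 * s2 * (- (s1*s3*c2 * (s3*s5*c4) + s1*s5*c0*(s3*s3))) = (e*e) * (s1*s2*s2*s3) * Z).
  { replace (s2 * s2 * (- (s1*s3*c2 * (s3*s5*c4) + s1*s5*c0*(s3*s3)))) with
      (s2 * s2 * - (- (s1 * s3 * c2) * - (s3 * s5 * c4) - - (s1 * s5 * c0) * (s3 * s3))) by ring.
    rewrite F1. ring. }
  assert (F2' : s4 * s4 * Z = (e*e) * (s3*s4*s4*s5) * (- (s2*s4*c3))) by (rewrite F2; ring).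
  rewrite He in F1', F2'.
  assert (K : (s1*s2*s2*s3*s3*s4*s4*s5) * (c3 * (s2*s4) - (c2*c4+c0)) = 0).
  { assert (X1 : s4*s4*(s2 * s2 * (- (s1*s3*c2 * (s3*s5*c4) + s1*s5*c0*(s3*s3))))
       = (s1*s2*s2*s3) * (s4*s4*Z)) by (rewrite F1'; ring).
    rewrite F2' in X1.
    assert (Y : (s1*s2*s2*s3*s3*s4*s4*s5) * (c3 * (s2*s4) - (c2*c4+c0)) =
      s4*s4*(s2 * s2 * (- (s1*s3*c2 * (s3*s5*c4) + s1*s5*c0*(s3*s3)))) -
      (s1*s2*s2*s3) * (1 * (s3*s4*s4*s5) * (- (s2*s4*c3)))) by ring.
    rewrite Y, X1. ring. }
  apply Rmult_integral in K. destruct K as [K|K].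
  - assert (0 < s1*s2*s2*s3*s3*s4*s4*s5) by (repeat apply Rmult_lt_0_compat; auto). lra.
  - lra.
Qed.

Lemma core (p0 p1 p2 p3 p4 p5 : pt) (c0 c1 c2 c3 c4 c5 s0 s1 s2 s3 s4 s5 e : R) :
  mink p0 p0 = -1 -> mink p1 p1 = -1 -> mink p2 p2 = -1 ->
  mink p3 p3 = -1 -> mink p4 p4 = -1 -> mink p5 p5 = -1 ->
  mink p0 p1 = - c0 -> mink p1 p2 = - c1 -> mink p2 p3 = - c2 ->
  mink p3 p4 = - c3 -> mink p4 p5 = - c4 -> mink p5 p0 = - c5 ->
  mink p0 p2 = - (c0 * c1) -> mink p1 p3 = - (c1 * c2) -> mink p2 p4 = - (c2 * c3) ->
  mink p3 p5 = - (c3 * c4) -> mink p4 p0 = - (c4 * c5) -> mink p5 p1 = - (c5 * c0) ->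
  0 <= s0 -> 0 <= s1 -> 0 <= s2 -> 0 <= s3 -> 0 <= s4 -> 0 <= s5 ->
  s0 * s0 = c0 * c0 - 1 -> s1 * s1 = c1 * c1 - 1 -> s2 * s2 = c2 * c2 - 1 ->
  s3 * s3 = c3 * c3 - 1 -> s4 * s4 = c4 * c4 - 1 -> s5 * s5 = c5 * c5 - 1 ->
  e * e = 1 ->
  0 < e * det3 p0 p1 p2 -> 0 < e * det3 p1 p2 p3 -> 0 < e * det3 p2 p3 p4 ->
  0 < e * det3 p3 p4 p5 -> 0 < e * det3 p4 p5 p0 -> 0 < e * det3 p5 p0 p1 ->
  c3 * (s2 * s4) = c2 * c4 + c0.
Proof.
  intros H0 H1 H2 H3 H4 H5 E0 E1 E2 E3 E4 E5 Q0 Q1 Q2 Q3 Q4 Q5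
    P0 P1 P2 P3 P4 P5 S0 S1 S2 S3 S4 S5 He O0 O1 O2 O3 O4 O5.
  assert (Q4' : mink p0 p4 = - (c4 * c5)) by (rewrite mink_sym; auto).
  assert (Q5' : mink p1 p5 = - (c5 * c0)) by (rewrite mink_sym; auto).
  assert (E5' : mink p0 p5 = - c5) by (rewrite mink_sym; auto).
  destruct (sign_root e _ s0 s1 He O0 P0 P1 (DDl _ _ _ _ _ _ _ H0 H1 H2 E0 E1 Q0 S0 S1)) as [D0 [s0p s1p]].
  destruct (sign_root e _ s1 s2 He O1 P1 P2 (DDl _ _ _ _ _ _ _ H1 H2 H3 E1 E2 Q1 S1 S2)) as [D1 [_ s2p]].
  destruct (sign_root e _ s2 s3 He O2 P2 P3 (DDl _ _ _ _ _ _ _ H2 H3 H4 E2 E3 Q2 S2 S3)) as [D2 [_ s3p]].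
  destruct (sign_root e _ s3 s4 He O3 P3 P4 (DDl _ _ _ _ _ _ _ H3 H4 H5 E3 E4 Q3 S3 S4)) as [D3 [_ s4p]].
  destruct (sign_root e _ s4 s5 He O4 P4 P5 (DDl _ _ _ _ _ _ _ H4 H5 H0 E4 E5 Q4 S4 S5)) as [D4 [_ s5p]].
  destruct (sign_root e _ s5 s0 He O5 P5 P0 (DDl _ _ _ _ _ _ _ H5 H0 H1 E5 E0 Q5 S5 S0)) as [D5 _].
  set (N0 := mc p0 p1). set (N1 := mc p1 p2). set (N2 := mc p2 p3).
  set (N3 := mc p3 p4). set (N4 := mc p4 p5). set (N5 := mc p5 p0).
  assert (n1 : mink N1 N1 = s1 * s1) by (apply (NNl _ _ c1); auto).
  assert (n2 : mink N2 N2 = s2 * s2) by (apply (NNl _ _ c2); auto).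
  assert (n3 : mink N3 N3 = s3 * s3) by (apply (NNl _ _ c3); auto).
  assert (n4 : mink N4 N4 = s4 * s4) by (apply (NNl _ _ c4); auto).
  assert (q12 : mink N1 N2 = 0) by (apply (PPl _ _ _ c1 c2); auto).
  assert (q23 : mink N2 N3 = 0) by (apply (PPl _ _ _ c2 c3); auto).
  assert (q34 : mink N3 N4 = 0) by (apply (PPl _ _ _ c3 c4); auto).
  assert (q45 : mink N4 N5 = 0) by (apply (PPl _ _ _ c4 c5); auto).
  assert (n0 : mink N0 N0 = s0 * s0) by (apply (NNl _ _ c0); auto).
  assert (q50 : mink N5 N0 = 0) by (apply (PPl _ _ _ c5 c0); auto).
  assert (q01 : mink N0 N1 = 0) by (apply (PPl _ _ _ c0 c1); auto).
  pose proof (CCl p1 p2 p3 p4 c2 q12 q23 E2) as C13. fold N1 N2 N3 in C13.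
  pose proof (CCl p3 p4 p5 p0 c4 q34 q45 E4) as C35. fold N3 N4 N5 in C35.
  pose proof (CCl p5 p0 p1 p2 c0 q50 q01 E0) as C51. fold N5 N0 N1 in C51.
  pose proof (CCl p2 p3 p4 p5 c3 q23 q34 E3) as C24. fold N2 N3 N4 in C24.
  rewrite n2, D1, D2 in C13. rewrite n4, D3, D4 in C35.
  rewrite n0, D5, D0 in C51. rewrite n3, D2, D3 in C24.
  apply cancel_l in C13; auto. apply cancel_l in C35; auto.
  apply cancel_l in C51; auto. apply cancel_l in C24; auto.
  rewrite mink_sym in C51.
  pose proof (projid N1 N3 N2 (mc N3 N5)) as PJ1.
  rewrite q12, (mink_sym N3 N2), q23, <- mc_dot, binet, n2, n3 in PJ1.
  rewrite det_swap23 in PJ1.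
  replace (det3 N1 N2 N3) with (- (det3 p1 p2 p3 * det3 p2 p3 p4)) in PJ1 by (unfold N1, N2, N3; rewrite dcdet; ring).
  rewrite D1, D2 in PJ1.
  rewrite (mink_sym N2), mc_dot in PJ1.
  pose proof (projid N3 N5 N4 N2) as PJ2.
  rewrite q34, (mink_sym N5 N4), q45, n4 in PJ2.
  rewrite (det_swap23 N3 N4 N5) in PJ2.
  replace (det3 N3 N4 N5) with (- (det3 p3 p4 p5 * det3 p4 p5 p0)) in PJ2 by (unfold N3, N4, N5; rewrite dcdet; ring).
  rewrite D3, D4, (mink_sym N4 N2) in PJ2.
  apply (final_alg c0 c2 c3 c4 s1 s2 s3 s4 s5 e (mink N1 N3) (mink N3 N5) (mink N1 N5) (mink N2 N4)
    (det3 N3 N5 N2)); auto; try (rewrite C51; ring); lra.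
Qed.

Lemma tangent_mink p q r : mink p p = -1 ->
  mink (tangent p q) (tangent p r) = mink q r + mink p q * mink p r.
Proof.
  intro H.
  assert (I : mink (tangent p q) (tangent p r) = mink q r + 2 * (mink p q * mink p r) + mink p q * mink p r * mink p p).
  { destruct p as [[? ?] ?], q as [[? ?] ?], r as [[? ?] ?]; simpl; ring. }
  rewrite I, H. ring.
Qed.

Lemma cosh_ge1 x : 1 <= cosh x.
Proof.
  unfold cosh. pose proof (exp_pos x). pose proof (exp_pos (-x)).
  assert (exp x * exp (-x) = 1) by (rewrite <- exp_plus; replace (x + - x) with 0 by ring; apply exp_0).
  assert (0 <= (exp x - exp (-x))^2) by apply pow2_ge_0.
  assert ((exp x + exp (-x))^2 >= 4) by nra.
  nra.
Qed.

Definition sc (c : R) : R := sqrt (c * c - 1).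

Lemma sc_prop c : 1 <= c -> 0 <= sc c /\ sc c * sc c = c * c - 1.
Proof. intro H. unfold sc. split. apply sqrt_pos. apply sqrt_sqrt. nra. Qed.

Lemma hex_core P l0 l1 l2 l3 l4 l5 : right_angled_hexagon P ->
  side_length P 0 l0 -> side_length P 1 l1 -> side_length P 2 l2 ->
  side_length P 3 l3 -> side_length P 4 l4 -> side_length P 5 l5 ->
  cosh l3 * (sc (cosh l2) * sc (cosh l4)) = cosh l2 * cosh l4 + cosh l0 /\
  cosh l5 * (sc (cosh l4) * sc (cosh l0)) = cosh l4 * cosh l0 + cosh l2 /\
  cosh l1 * (sc (cosh l0) * sc (cosh l2)) = cosh l0 * cosh l2 + cosh l4.
Proof.
  intros [HH [HR HO]] L0 L1 L2 L3 L4 L5.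
  unfold side_length, hdist_is, nxt in L0, L1, L2, L3, L4, L5; simpl in L0, L1, L2, L3, L4, L5.
  destruct L0 as [_ L0], L1 as [_ L1], L2 as [_ L2], L3 as [_ L3], L4 as [_ L4], L5 as [_ L5].
  assert (HP : forall a, (a < 6)%nat -> mink (P a) (P a) = -1).
  { intros a Ha. specialize (HH a Ha). destruct (P a) as [[? ?] ?]. apply HH. }
  pose proof (HP 0%nat ltac:(lia)) as H0. pose proof (HP 1%nat ltac:(lia)) as H1.
  pose proof (HP 2%nat ltac:(lia)) as H2. pose proof (HP 3%nat ltac:(lia)) as H3.
  pose proof (HP 4%nat ltac:(lia)) as H4. pose proof (HP 5%nat ltac:(lia)) as H5.
  assert (RA : forall a, (a < 6)%nat -> mink (P (prv a)) (P (nxt a)) = - (mink (P a) (P (prv a)) * mink (P a) (P (nxt a)))).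
  { intros a Ha. pose proof (HR a Ha) as R. rewrite tangent_mink in R by (apply HP; auto). lra. }
  pose proof (RA 0%nat ltac:(lia)) as A0. pose proof (RA 1%nat ltac:(lia)) as A1.
  pose proof (RA 2%nat ltac:(lia)) as A2. pose proof (RA 3%nat ltac:(lia)) as A3.
  pose proof (RA 4%nat ltac:(lia)) as A4. pose proof (RA 5%nat ltac:(lia)) as A5.
  unfold prv, nxt in A0, A1, A2, A3, A4, A5; simpl in A0, A1, A2, A3, A4, A5.
  set (c0 := cosh l0) in *. set (c1 := cosh l1) in *. set (c2 := cosh l2) in *.
  set (c3 := cosh l3) in *. set (c4 := cosh l4) in *. set (c5 := cosh l5) in *.
  assert (E0 : mink (P 0%nat) (P 1%nat) = - c0) by lra.
  assert (E1 : mink (P 1%nat) (P 2%nat) = - c1) by lra.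
  assert (E2 : mink (P 2%nat) (P 3%nat) = - c2) by lra.
  assert (E3 : mink (P 3%nat) (P 4%nat) = - c3) by lra.
  assert (E4 : mink (P 4%nat) (P 5%nat) = - c4) by lra.
  assert (E5 : mink (P 5%nat) (P 0%nat) = - c5) by lra.
  assert (E0' : mink (P 1%nat) (P 0%nat) = - c0) by (rewrite mink_sym; lra).
  assert (E1' : mink (P 2%nat) (P 1%nat) = - c1) by (rewrite mink_sym; lra).
  assert (E2' : mink (P 3%nat) (P 2%nat) = - c2) by (rewrite mink_sym; lra).
  assert (E3' : mink (P 4%nat) (P 3%nat) = - c3) by (rewrite mink_sym; lra).
  assert (E4' : mink (P 5%nat) (P 4%nat) = - c4) by (rewrite mink_sym; lra).
  assert (E5' : mink (P 0%nat) (P 5%nat) = - c5) by (rewrite mink_sym; lra).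
  rewrite E5', E0 in A0. rewrite E0', E1 in A1. rewrite E1', E2 in A2.
  rewrite E2', E3 in A3. rewrite E3', E4 in A4. rewrite E4', E5 in A5.
  assert (Q0 : mink (P 0%nat) (P 2%nat) = - (c0 * c1)) by (rewrite A1; ring).
  assert (Q1 : mink (P 1%nat) (P 3%nat) = - (c1 * c2)) by (rewrite A2; ring).
  assert (Q2 : mink (P 2%nat) (P 4%nat) = - (c2 * c3)) by (rewrite A3; ring).
  assert (Q3 : mink (P 3%nat) (P 5%nat) = - (c3 * c4)) by (rewrite A4; ring).
  assert (Q4 : mink (P 4%nat) (P 0%nat) = - (c4 * c5)) by (rewrite A5; ring).
  assert (Q5 : mink (P 5%nat) (P 1%nat) = - (c5 * c0)) by (rewrite A0; ring).
  destruct (sc_prop c0 (cosh_ge1 _)) as [P0 S0].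
  destruct (sc_prop c1 (cosh_ge1 _)) as [P1 S1].
  destruct (sc_prop c2 (cosh_ge1 _)) as [P2 S2].
  destruct (sc_prop c3 (cosh_ge1 _)) as [P3 S3].
  destruct (sc_prop c4 (cosh_ge1 _)) as [P4 S4].
  destruct (sc_prop c5 (cosh_ge1 _)) as [P5 S5].
  assert (HOe : exists e, e * e = 1 /\ forall a b, (a < 6)%nat -> (b < 6)%nat -> b <> a -> b <> nxt a ->
      0 < e * det3 (P a) (P (nxt a)) (P b)).
  { destruct HO as [HO|HO]; [exists 1 | exists (-1)]; split; try ring; intros a b ha hb h1 h2.
    - specialize (HO a b ha hb h1 h2). lra.
    - specialize (HO a b ha hb h1 h2). lra. }
  destruct HOe as [e [He HOe]].
  pose proof (HOe 0%nat 2%nat ltac:(lia) ltac:(lia) ltac:(lia) ltac:(unfold nxt; simpl; lia)) as O0.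
  pose proof (HOe 1%nat 3%nat ltac:(lia) ltac:(lia) ltac:(lia) ltac:(unfold nxt; simpl; lia)) as O1.
  pose proof (HOe 2%nat 4%nat ltac:(lia) ltac:(lia) ltac:(lia) ltac:(unfold nxt; simpl; lia)) as O2.
  pose proof (HOe 3%nat 5%nat ltac:(lia) ltac:(lia) ltac:(lia) ltac:(unfold nxt; simpl; lia)) as O3.
  pose proof (HOe 4%nat 0%nat ltac:(lia) ltac:(lia) ltac:(lia) ltac:(unfold nxt; simpl; lia)) as O4.
  pose proof (HOe 5%nat 1%nat ltac:(lia) ltac:(lia) ltac:(lia) ltac:(unfold nxt; simpl; lia)) as O5.
  unfold nxt in O0, O1, O2, O3, O4, O5; simpl in O0, O1, O2, O3, O4, O5.
  split; [|split].
  - apply (core (P 0%nat) (P 1%nat) (P 2%nat) (P 3%nat) (P 4%nat) (P 5%nat)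
      c0 c1 c2 c3 c4 c5 (sc c0) (sc c1) (sc c2) (sc c3) (sc c4) (sc c5) e); auto.
  - apply (core (P 2%nat) (P 3%nat) (P 4%nat) (P 5%nat) (P 0%nat) (P 1%nat)
      c2 c3 c4 c5 c0 c1 (sc c2) (sc c3) (sc c4) (sc c5) (sc c0) (sc c1) e); auto.
  - apply (core (P 4%nat) (P 5%nat) (P 0%nat) (P 1%nat) (P 2%nat) (P 3%nat)
      c4 c5 c0 c1 c2 c3 (sc c4) (sc c5) (sc c0) (sc c1) (sc c2) (sc c3) e); auto.
Qed.

Definition acosh (x : R) : R := ln (x + sqrt (x * x - 1)).

Lemma acosh_spec x : 1 <= x -> cosh (acosh x) = x /\ 0 <= acosh x.
Proof.
  intro H. unfold acosh.
  assert (Hs : 0 <= sqrt (x*x-1)) by apply sqrt_pos.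
  assert (Hs2 : sqrt (x*x-1) * sqrt (x*x-1) = x*x-1) by (apply sqrt_sqrt; nra).
  assert (Hp : 0 < x + sqrt (x*x-1)) by lra.
  split.
  - unfold cosh. rewrite exp_Ropp, exp_ln by auto.
    set (s := sqrt (x*x-1)) in *.
    assert (E : / (x + s) = x - s).
    { apply Rmult_eq_reg_l with (x + s); [|lra]. rewrite Rinv_r by lra. nra. }
    rewrite E. field.
  - rewrite <- ln_1. destruct (Req_dec (x + sqrt (x*x-1)) 1) as [E|E].
    + rewrite E; lra.
    + left. apply ln_increasing; lra.
Qed.

Lemma cosh_inj a b : 0 <= a -> 0 <= b -> cosh a = cosh b -> a = b.
Proof.
  intros Ha Hb H. unfold cosh in H. rewrite !exp_Ropp in H.
  assert (ea : 1 <= exp a) by (rewrite <- exp_0; destruct Ha as [Ha|Ha]; [left; apply exp_increasing; auto | rewrite Ha; lra]).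
  assert (eb : 1 <= exp b) by (rewrite <- exp_0; destruct Hb as [Hb|Hb]; [left; apply exp_increasing; auto | rewrite Hb; lra]).
  assert (K : (exp a - exp b) * (exp a * exp b - 1) = 0).
  { assert (H' : exp a + / exp a = exp b + / exp b) by lra.
    replace ((exp a - exp b) * (exp a * exp b - 1)) with
      (exp a * exp b * ((exp a + / exp a) - (exp b + / exp b))) by (field; lra).
    rewrite H'. ring. }
  apply Rmult_integral in K. destruct K as [K|K].
  - apply exp_inv. lra.
  - assert (exp a = 1) by nra. assert (exp b = 1) by nra. apply exp_inv. lra.
Qed.

Lemma cosh_double y : cosh (2 * y) = 2 * cosh y ^ 2 - 1.
Proof.
  unfold cosh. replace (2*y) with (y + y) by ring. replace (- (y+y)) with (-y + -y) by ring.
  rewrite !exp_plus.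
  assert (exp y * exp (-y) = 1) by (rewrite <- exp_plus; replace (y + - y) with 0 by ring; apply exp_0).
  nra.
Qed.

Lemma acosh_derive y : 1 < y -> is_derive acosh y (/ sqrt (y * y - 1)).
Proof.
  intro H. unfold acosh.
  assert (Hs : 0 < sqrt (y*y-1)) by (apply sqrt_lt_R0; nra).
  auto_derive.
  - replace (y*y + - (1)) with (y*y-1) by ring. split; [nra|]. split; auto. lra.
  - replace (y*y + - (1)) with (y*y-1) by ring. field. lra.
Qed.

Definition T (a b c : R) : R := acosh ((b * c + a) / (sc b * sc c)).
Definition Dl (X Y Z : R) : R := X*X + Y*Y + Z*Z + 2*X*Y*Z - 1.
Definition Jv (X Y Z dX dY dZ : R) : R :=
  (dX + dY*Z + Y*dZ - (Y*Z+X)*(Y*dY/(Y*Y-1) + Z*dZ/(Z*Z-1))) / sqrt (Dl X Y Z).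

Lemma T_derive (a b c : R -> R) t da db dc :
  is_derive a t da -> is_derive b t db -> is_derive c t dc ->
  1 < a t -> 1 < b t -> 1 < c t ->
  is_derive (fun x => T (a x) (b x) (c x)) t (Jv (a t) (b t) (c t) da db dc).
Proof.
  intros Ha Hb Hc Ha1 Hb1 Hc1.
  set (A := a t) in *. set (B := b t) in *. set (C := c t) in *.
  assert (sB : 0 < sc B) by (unfold sc; apply sqrt_lt_R0; nra).
  assert (sC : 0 < sc C) by (unfold sc; apply sqrt_lt_R0; nra).
  assert (sB2 : sc B * sc B = B*B-1) by (unfold sc; apply sqrt_sqrt; nra).
  assert (sC2 : sc C * sc C = C*C-1) by (unfold sc; apply sqrt_sqrt; nra).
  set (F := fun x => (b x * c x + a x) / (sc (b x) * sc (c x))).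
  set (dF := ((db*C + B*dc + da) * (sc B * sc C) - (B*C+A) * (B*db/sc B * sc C + sc B * (C*dc/sc C))) / (sc B * sc C)^2).
  assert (HF : is_derive F t dF).
  { unfold F, sc. auto_derive.
    - change (b t) with B; change (c t) with C.
      replace (B * B + - (1)) with (B*B-1) by ring.
      replace (C * C + - (1)) with (C*C-1) by ring.
      repeat split; try (eexists; eassumption); try nra.
      fold (sc B) (sc C). apply Rmult_integral_contrapositive; split; lra.
    - change (b t) with B; change (c t) with C; change (a t) with A.
      replace (B * B + - (1)) with (B*B-1) by ring.
      replace (C * C + - (1)) with (C*C-1) by ring.
      fold (sc B) (sc C).
      replace (Derive (fun x => b x) t) with db by (symmetry; apply is_derive_unique; exact Hb).
      replace (Derive (fun x => c x) t) with dc by (symmetry; apply is_derive_unique; exact Hc).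
      replace (Derive (fun x => a x) t) with da by (symmetry; apply is_derive_unique; exact Ha).
      unfold dF. field. lra. }
  set (FT := (B * C + A) / (sc B * sc C)).
  assert (HDl : 0 < Dl A B C).
  { unfold Dl. assert (1 < A*A) by nra. assert (0 < B*B) by nra. assert (0 < C*C) by nra.
    assert (0 < A*B) by nra. assert (0 < A*B*C) by nra. lra. }
  assert (EQ : (FT * FT - 1) * ((sc B * sc C) * (sc B * sc C)) = Dl A B C).
  { unfold FT, Dl. field_simplify; [|lra].
    replace (sc B ^ 2) with (B*B-1) by (rewrite <- sB2; ring).
    replace (sc C ^ 2) with (C*C-1) by (rewrite <- sC2; ring).
    ring. }
  assert (FT1 : 1 < FT).
  { assert (0 < FT) by (unfold FT; apply Rdiv_lt_0_compat; nra).
    assert (0 < (sc B * sc C) * (sc B * sc C)) by nra.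
    assert (0 < FT * FT - 1).
    { destruct (Rlt_le_dec 0 (FT*FT-1)) as [h|h]; auto.
      assert ((FT * FT - 1) * ((sc B * sc C) * (sc B * sc C)) <= 0) by nra. lra. }
    nra. }
  assert (SQ : sqrt (Dl A B C) = sqrt (FT * FT - 1) * (sc B * sc C)).
  { rewrite <- EQ. rewrite sqrt_mult_alt by nra. rewrite sqrt_square; nra. }
  assert (q0 : 0 < sqrt (FT * FT - 1)) by (apply sqrt_lt_R0; nra).
  pose proof (is_derive_comp acosh F t _ _ (acosh_derive (F t) FT1) HF) as HC.
  unfold T. eapply is_derive_ext; [intro x; reflexivity|].
  replace (Jv A B C da db dc) with (scal dF (/ sqrt (F t * F t - 1))); [exact HC|].
  unfold scal; simpl; unfold mult; simpl. change (F t) with FT.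
  unfold Jv. rewrite SQ. rewrite <- sB2, <- sC2. unfold dF. field.
  repeat split; lra.
Qed.

Definition hf (k x y : R) : R := exp (x + y) * k.
Definition Af (k x y : R) : R := 2 * (hf k x y) ^ 2 - 1.

Lemma Af_d1 k x y : is_derive (fun t => Af k t y) x (2 * (Af k x y + 1)).
Proof. unfold Af, hf. auto_derive; auto. ring. Qed.
Lemma Af_d2 k x y : is_derive (fun t => Af k y t) x (2 * (Af k y x + 1)).
Proof. unfold Af, hf. auto_derive; auto. ring. Qed.

Lemma Af_gt1 k x y : 1 < hf k x y -> 1 < Af k x y.
Proof. unfold Af. intro H. nra. Qed.

Lemma hf_iff k x y : 0 < k -> (1 < hf k x y <-> - ln k < x + y).
Proof.
  intro Hk. unfold hf. split; intro H.
  - assert (exp (- ln k) < exp (x + y)).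
    { rewrite exp_Ropp, exp_ln by auto. apply Rmult_lt_reg_r with k; auto.
      rewrite Rinv_l by lra. lra. }
    destruct (Rlt_le_dec (-ln k) (x+y)) as [h|h]; auto.
    destruct h as [h|h]; [apply exp_increasing in h|rewrite h in *]; lra.
  - apply exp_increasing in H. rewrite exp_Ropp, exp_ln in H by auto.
    apply Rmult_lt_compat_r with (r := k) in H; auto. rewrite Rinv_l in H by lra. lra.
Qed.

Lemma loc_ball (x0 e : R) : 0 < e -> locally x0 (fun t => x0 - e < t < x0 + e).
Proof.
  intro He. exists (mkposreal e He). intros y Hy.
  unfold ball in Hy; simpl in Hy. unfold AbsRing_ball, abs, minus, plus, opp in Hy; simpl in Hy.
  apply Rabs_def2 in Hy. simpl in Hy. lra.
Qed.

Lemma cosh_gt1 x : 0 < x -> 1 < cosh x.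
Proof.
  intro H. destruct (cosh_ge1 x) as [h|h]; auto.
  exfalso. assert (x = 0) by (apply cosh_inj; [lra|lra| rewrite cosh_0; auto]). lra.
Qed.

Lemma mk_len l0 x y : 1 < hf (cosh (l0/2)) x y ->
  new_length l0 x y (2 * acosh (hf (cosh (l0/2)) x y)) /\
  cosh (2 * acosh (hf (cosh (l0/2)) x y)) = Af (cosh (l0/2)) x y.
Proof.
  intro H. destruct (acosh_spec (hf (cosh (l0/2)) x y)) as [E P]; [lra|].
  split; [split|].
  - destruct P as [P|P]; [lra|]. rewrite <- P in E. rewrite cosh_0 in E. lra.
  - replace (2 * acosh (hf (cosh (l0 / 2)) x y) / 2) with (acosh (hf (cosh (l0 / 2)) x y)) by field.
    rewrite E. unfold hf. ring.
  - rewrite cosh_double, E. reflexivity.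
Qed.

Lemma theta_val th X Y Z : 0 <= th -> 1 < Y -> 1 < Z ->
  cosh th * (sc Y * sc Z) = Y * Z + X -> th = T X Y Z.
Proof.
  intros H0 HY HZ H.
  assert (sY : 0 < sc Y) by (unfold sc; apply sqrt_lt_R0; nra).
  assert (sZ : 0 < sc Z) by (unfold sc; apply sqrt_lt_R0; nra).
  assert (E : (Y * Z + X) / (sc Y * sc Z) = cosh th).
  { rewrite <- H. field. lra. }
  unfold T. rewrite E. destruct (acosh_spec (cosh th) (cosh_ge1 th)) as [E1 P1].
  apply cosh_inj; auto.
Qed.

Lemma part_deriv (th X Y Z : R -> R) t0 dX dY dZ :
  locally t0 (fun t => T (X t) (Y t) (Z t) = th t) ->
  is_derive X t0 dX -> is_derive Y t0 dY -> is_derive Z t0 dZ ->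
  1 < X t0 -> 1 < Y t0 -> 1 < Z t0 ->
  is_derive th t0 (Jv (X t0) (Y t0) (Z t0) dX dY dZ).
Proof.
  intros L HX HY HZ h1 h2 h3.
  eapply is_derive_ext_loc; [exact L|]. apply T_derive; auto.
Qed.

Theorem lemma2 (l0jk l0ki l0ij : R) (thi thj thk : R -> R -> R -> R) :
  0 < l0jk -> 0 < l0ki -> 0 < l0ij ->
  (forall wi wj wk ljk lki lij,
     new_length l0jk wj wk ljk -> new_length l0ki wk wi lki ->
     new_length l0ij wi wj lij ->
     exists P : nat -> pt,
       right_angled_hexagon P /\
       side_length P 0 ljk /\ side_length P 2 lki /\ side_length P 4 lij /\
       side_length P 3 (thi wi wj wk) /\ side_length P 5 (thj wi wj wk) /\
       side_length P 1 (thk wi wj wk)) ->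
  forall wi wj wk, in_W l0jk l0ki l0ij wi wj wk ->
    jacobian_symmetric (theta3 thi thj thk) wi wj wk.
Proof.
  intros Hl1 Hl2 Hl3 Hhex wi wj wk HW.
  set (k1 := cosh (l0jk / 2)). set (k2 := cosh (l0ki / 2)). set (k3 := cosh (l0ij / 2)).
  assert (k1p : 0 < k1) by (pose proof (cosh_ge1 (l0jk/2)); unfold k1; lra).
  assert (k2p : 0 < k2) by (pose proof (cosh_ge1 (l0ki/2)); unfold k2; lra).
  assert (k3p : 0 < k3) by (pose proof (cosh_ge1 (l0ij/2)); unfold k3; lra).
  set (Gd := fun x y z => - ln k1 < y + z /\ - ln k2 < z + x /\ - ln k3 < x + y).
  assert (VAL : forall x y z, Gd x y z ->
    T (Af k1 y z) (Af k2 z x) (Af k3 x y) = thi x y z /\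
    T (Af k2 z x) (Af k3 x y) (Af k1 y z) = thj x y z /\
    T (Af k3 x y) (Af k1 y z) (Af k2 z x) = thk x y z).
  { intros x y z [g1 [g2 g3]].
    apply hf_iff in g1; auto. apply hf_iff in g2; auto. apply hf_iff in g3; auto.
    destruct (mk_len l0jk y z g1) as [N1 C1].
    destruct (mk_len l0ki z x g2) as [N2 C2].
    destruct (mk_len l0ij x y g3) as [N3 C3].
    destruct (Hhex x y z _ _ _ N1 N2 N3) as [P [HP [S0 [S2 [S4 [S3 [S5 S1]]]]]]].
    destruct (hex_core P _ _ _ _ _ _ HP S0 S1 S2 S3 S4 S5) as [F3 [F5 F1]].
    fold k1 k2 k3 in C1, C2, C3, F3, F5, F1. rewrite C1, C2, C3 in F3, F5, F1.
    pose proof (Af_gt1 _ _ _ g1). pose proof (Af_gt1 _ _ _ g2). pose proof (Af_gt1 _ _ _ g3).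
    destruct S3 as [S3 _], S5 as [S5 _], S1 as [S1 _].
    split; [|split]; symmetry; apply theta_val; auto. }
  assert (G0 : Gd wi wj wk).
  { destruct HW as [[l [lp e1]] [[l' [lp' e2]] [l'' [lp'' e3]]]].
    split; [|split]; apply hf_iff; auto; unfold hf.
    - fold k1 in e1. rewrite <- e1. apply cosh_gt1. lra.
    - fold k2 in e2. rewrite <- e2. apply cosh_gt1. lra.
    - fold k3 in e3. rewrite <- e3. apply cosh_gt1. lra. }
  assert (L0 : locally wi (fun t => Gd t wj wk)).
  { destruct G0 as [g1 [g2 g3]]. set (e := Rmin (wk + wi + ln k2) (wi + wj + ln k3)).
    assert (He : 0 < e) by (unfold e; apply Rmin_glb_lt; lra).
    eapply filter_imp; [|apply (loc_ball wi e He)]. intros t Ht.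
    pose proof (Rmin_l (wk + wi + ln k2) (wi + wj + ln k3)).
    pose proof (Rmin_r (wk + wi + ln k2) (wi + wj + ln k3)). fold e in H, H0.
    unfold Gd; lra. }
  assert (L1 : locally wj (fun t => Gd wi t wk)).
  { destruct G0 as [g1 [g2 g3]]. set (e := Rmin (wj + wk + ln k1) (wi + wj + ln k3)).
    assert (He : 0 < e) by (unfold e; apply Rmin_glb_lt; lra).
    eapply filter_imp; [|apply (loc_ball wj e He)]. intros t Ht.
    pose proof (Rmin_l (wj + wk + ln k1) (wi + wj + ln k3)).
    pose proof (Rmin_r (wj + wk + ln k1) (wi + wj + ln k3)). fold e in H, H0.
    unfold Gd; lra. }
  assert (L2 : locally wk (fun t => Gd wi wj t)).
  { destruct G0 as [g1 [g2 g3]]. set (e := Rmin (wj + wk + ln k1) (wk + wi + ln k2)).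
    assert (He : 0 < e) by (unfold e; apply Rmin_glb_lt; lra).
    eapply filter_imp; [|apply (loc_ball wk e He)]. intros t Ht.
    pose proof (Rmin_l (wj + wk + ln k1) (wk + wi + ln k2)).
    pose proof (Rmin_r (wj + wk + ln k1) (wk + wi + ln k2)). fold e in H, H0.
    unfold Gd; lra. }
  assert (A1 : 1 < Af k1 wj wk) by (apply Af_gt1, hf_iff; auto; apply G0).
  assert (B1 : 1 < Af k2 wk wi) by (apply Af_gt1, hf_iff; auto; apply G0).
  assert (C1 : 1 < Af k3 wi wj) by (apply Af_gt1, hf_iff; auto; apply G0).
  set (A0 := Af k1 wj wk) in *. set (B0 := Af k2 wk wi) in *. set (C0 := Af k3 wi wj) in *.
  pose (dA := fun b : nat => match b with O => 0 | _ => 2 * (A0 + 1) end).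
  pose (dB := fun b : nat => match b with 1%nat => 0 | _ => 2 * (B0 + 1) end).
  pose (dC := fun b : nat => match b with 2%nat => 0 | _ => 2 * (C0 + 1) end).
  pose (Jm := fun a b : nat => match a with
     | O => Jv A0 B0 C0 (dA b) (dB b) (dC b)
     | 1%nat => Jv B0 C0 A0 (dB b) (dC b) (dA b)
     | _ => Jv C0 A0 B0 (dC b) (dA b) (dB b) end).
  assert (D : forall a b, (a < 3)%nat -> (b < 3)%nat ->
    is_derive (partial_fun (theta3 thi thj thk a) b wi wj wk) (coord b wi wj wk) (Jm a b)).
  { intros a b ha hb.
    destruct a as [|[|[|a]]]; try lia; destruct b as [|[|[|b]]]; try lia; simpl.
  - apply (part_deriv _ (fun _ : R => Af k1 wj wk) (fun t => Af k2 wk t) (fun t => Af k3 t wj)).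
    + eapply filter_imp; [|exact L0]. intros t Ht. apply VAL in Ht. simpl. tauto.
    + exact (is_derive_const _ _).
    + exact (Af_d2 k2 wi wk).
    + exact (Af_d1 k3 wi wj).
    + exact A1.
    + exact B1.
    + exact C1.
  - apply (part_deriv _ (fun t => Af k1 t wk) (fun _ : R => Af k2 wk wi) (fun t => Af k3 wi t)).
    + eapply filter_imp; [|exact L1]. intros t Ht. apply VAL in Ht. simpl. tauto.
    + exact (Af_d1 k1 wj wk).
    + exact (is_derive_const _ _).
    + exact (Af_d2 k3 wj wi).
    + exact A1.
    + exact B1.
    + exact C1.
  - apply (part_deriv _ (fun t => Af k1 wj t) (fun t => Af k2 t wi) (fun _ : R => Af k3 wi wj)).
    + eapply filter_imp; [|exact L2]. intros t Ht. apply VAL in Ht. simpl. tauto.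
    + exact (Af_d2 k1 wk wj).
    + exact (Af_d1 k2 wk wi).
    + exact (is_derive_const _ _).
    + exact A1.
    + exact B1.
    + exact C1.
  - apply (part_deriv _ (fun t => Af k2 wk t) (fun t => Af k3 t wj) (fun _ : R => Af k1 wj wk)).
    + eapply filter_imp; [|exact L0]. intros t Ht. apply VAL in Ht. simpl. tauto.
    + exact (Af_d2 k2 wi wk).
    + exact (Af_d1 k3 wi wj).
    + exact (is_derive_const _ _).
    + exact B1.
    + exact C1.
    + exact A1.
  - apply (part_deriv _ (fun _ : R => Af k2 wk wi) (fun t => Af k3 wi t) (fun t => Af k1 t wk)).
    + eapply filter_imp; [|exact L1]. intros t Ht. apply VAL in Ht. simpl. tauto.
    + exact (is_derive_const _ _).
    + exact (Af_d2 k3 wj wi).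
    + exact (Af_d1 k1 wj wk).
    + exact B1.
    + exact C1.
    + exact A1.
  - apply (part_deriv _ (fun t => Af k2 t wi) (fun _ : R => Af k3 wi wj) (fun t => Af k1 wj t)).
    + eapply filter_imp; [|exact L2]. intros t Ht. apply VAL in Ht. simpl. tauto.
    + exact (Af_d1 k2 wk wi).
    + exact (is_derive_const _ _).
    + exact (Af_d2 k1 wk wj).
    + exact B1.
    + exact C1.
    + exact A1.
  - apply (part_deriv _ (fun t => Af k3 t wj) (fun _ : R => Af k1 wj wk) (fun t => Af k2 wk t)).
    + eapply filter_imp; [|exact L0]. intros t Ht. apply VAL in Ht. simpl. tauto.
    + exact (Af_d1 k3 wi wj).
    + exact (is_derive_const _ _).
    + exact (Af_d2 k2 wi wk).
    + exact C1.
    + exact A1.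
    + exact B1.
  - apply (part_deriv _ (fun t => Af k3 wi t) (fun t => Af k1 t wk) (fun _ : R => Af k2 wk wi)).
    + eapply filter_imp; [|exact L1]. intros t Ht. apply VAL in Ht. simpl. tauto.
    + exact (Af_d2 k3 wj wi).
    + exact (Af_d1 k1 wj wk).
    + exact (is_derive_const _ _).
    + exact C1.
    + exact A1.
    + exact B1.
  - apply (part_deriv _ (fun _ : R => Af k3 wi wj) (fun t => Af k1 wj t) (fun t => Af k2 t wi)).
    + eapply filter_imp; [|exact L2]. intros t Ht. apply VAL in Ht. simpl. tauto.
    + exact (is_derive_const _ _).
    + exact (Af_d2 k1 wk wj).
    + exact (Af_d1 k2 wk wi).
    + exact C1.
    + exact A1.
    + exact B1.
  }
  assert (Dp : 0 < Dl A0 B0 C0).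
  { unfold Dl. assert (1 < A0*A0) by nra. assert (0 < B0*B0) by nra. assert (0 < C0*C0) by nra.
    assert (0 < A0*B0) by nra. assert (0 < A0*B0*C0) by nra. lra. }
  assert (Dq : 0 < sqrt (Dl A0 B0 C0)) by (apply sqrt_lt_R0; auto).
  assert (P1 : Dl B0 C0 A0 = Dl A0 B0 C0) by (unfold Dl; ring).
  assert (P2 : Dl C0 A0 B0 = Dl A0 B0 C0) by (unfold Dl; ring).
  assert (nA : A0 * A0 - 1 <> 0) by nra.
  assert (nB : B0 * B0 - 1 <> 0) by nra.
  assert (nC : C0 * C0 - 1 <> 0) by nra.
  split.
  - intros a b ha hb. exists (Jm a b). apply D; auto.
  - intros a b ha hb. unfold jacobian.
    rewrite (is_derive_unique _ _ _ (D a b ha hb)), (is_derive_unique _ _ _ (D b a hb ha)).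
    destruct a as [|[|[|a]]]; try lia; destruct b as [|[|[|b]]]; try lia; simpl; try reflexivity;
      unfold Jv; rewrite ?P1, ?P2; field; repeat split; lra.
Qed.
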